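(* Let $k$ be an algebraically closed field of characteristic $p>0$ and $P$ a finite $p$-group. Then every indecomposable finitely generated $kP$-module $M$ with $\mathrm{End}_{kP}(M)$ symmetric satisfies $\dim_k M\le|P|$, and if $P$ is non-cyclic there are infinitely many pairwise non-isomorphic such modules.
   Context: Symmetric: the algebra is isomorphic to its $k$-dual as a bimodule. *)

(* Defs.v *)
From HB Require Import structures.
From mathcomp Require Import all_boot all_order all_algebra all_fingroup all_solvable all_field all_character.
From mathcomp Require Import mxrepresentation.
Set Implicit Arguments. Unset Strict Implicit. Unset Printing Implicit Defensive.
Import GRing.Theory.
Local Open Scope ring_scope.

Section Defs.
Variables (F : fieldType) (gT : finGroupType) (G : {group gT}).

(* A finitely generated kG-module of k-dimension n, given by a matrix
   representation rG; submodules are row spaces U with mxmodule rG U. *)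

Definition mx_indecomposable n (rG : mx_representation F G n) : Prop :=
  (0 < n)%N /\
  forall U V : 'M[F]_n, mxmodule rG U -> mxmodule rG V ->
    (U + V :=: 1%:M)%MS -> (U :&: V)%MS = 0 :> 'M[F]_n ->
    U = 0 \/ V = 0.

Definition in_End n (rG : mx_representation F G n) (f : 'M[F]_n) : Prop :=
  centgmx rG f.

Definition End_linear_form n (rG : mx_representation F G n) (l : 'M[F]_n -> F) :=
  forall (a : F) (u v : 'M[F]_n), in_End rG u -> in_End rG v ->
    l (a *: u + v) = a * l u + l v.

(* End_{kG}(M) is symmetric: there is an isomorphism of E-E-bimodules
   phi : E -> Hom_k(E, k), where the dual carries the bimodule structure
   (a . f . b)(y) = f (b y a).  phi x is written (phi x : 'M_n -> F),
   only its values on E matter. *)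
Definition End_symmetric n (rG : mx_representation F G n) : Prop :=
  exists phi : 'M[F]_n -> 'M[F]_n -> F,
    (forall x, in_End rG x -> End_linear_form rG (phi x)) /\
    (forall (c : F) x x' y, in_End rG x -> in_End rG x' -> in_End rG y ->
        phi (c *: x + x') y = c * phi x y + phi x' y) /\
    (forall a x b y, in_End rG a -> in_End rG x -> in_End rG b -> in_End rG y ->
        phi (a *m x *m b) y = phi x (b *m y *m a)) /\
    (forall x, in_End rG x -> (forall y, in_End rG y -> phi x y = 0) -> x = 0) /\
    (forall l, End_linear_form rG l ->
        exists2 x, in_End rG x & forall y, in_End rG y -> phi x y = l y).

End Defs.

(* Main.v *)
Require Import Defs.
From HB Require Import structures.
From mathcomp Require Import all_boot all_order all_algebra all_fingroup all_solvable all_field all_character.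
From mathcomp Require Import mxrepresentation mxabelem.
From Stdlib Require Import Classical_Prop.
From mathcomp Require Import ring.
Set Implicit Arguments. Unset Strict Implicit. Unset Printing Implicit Defensive.
Import GRing.Theory.
Local Open Scope ring_scope.
Lemma fix_in_submod (k : fieldType) (p : nat) (gT : finGroupType) (P : {group gT})
  (pchar : p \in [pchar k]) (pP : (p.-group P)%g) n (rM : mx_representation k P n)
  (U : 'M[k]_n) : mxmodule rM U -> U != 0 ->
  exists2 v : 'rV[k]_n, v != 0 & ((v <= U)%MS && (v <= rfix_mx rM P)%MS).
Proof.
move=> modU nzU.
have := rfix_pgroup_pchar pchar (submod_repr modU) _ pP (subxx P).
rewrite lt0n mxrank_eq0 => /(_ nzU).
rewrite -mxrank_eq0 (rfix_submod modU (subxx P)) mxrank_eq0.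
have [/eqP -> |] := boolP ((U :&: rfix_mx rM P)%MS == 0); first by rewrite linear0 eqxx.
case/rowV0Pn => v; rewrite sub_capmx => Hv nzv _.
by exists v.
Qed.
Lemma bound_fix (k : fieldType) (p : nat) (gT : finGroupType) (P : {group gT})
  (pchar : p \in [pchar k]) (pP : (p.-group P)%g) n (rM : mx_representation k P n) :
  (0 < n)%N -> (\rank (rfix_mx rM P) <= 1)%N -> (n <= #|P|)%N.
Proof.
move=> n_gt0 rk1.
have := rfix_pgroup_pchar pchar rM n_gt0 pP (subxx P).
case/rowV0Pn => w0 Hw0 nzw0.
have sub0 : forall v : 'rV_n, (v <= rfix_mx rM P)%MS -> (v <= w0)%MS.
  move=> v Hv; apply: submx_trans Hv _.
  rewrite -(geq_leqif (mxrank_leqif_sup Hw0)).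
  by apply: leq_trans rk1 _; rewrite rank_rV lt0n nzw0.
have [j nzj] : exists j, w0 0 j != 0.
  apply/existsP; apply: contraR nzw0; rewrite negb_exists => /forallP H.
  by apply/eqP/matrixP => i l; rewrite ord1 mxE; apply/eqP/negPn/H.
pose u : 'cV[k]_n := delta_mx j 0.
pose A := \matrix_(i < n, l < #|P|) (rM (enum_val l) *m u) i 0.
have keyA : forall m (W : 'M_(m, n)), W *m A = 0 <-> forall g, g \in P -> W *m rM g *m u = 0.
  move=> m W; split => [H g Pg | H].
    apply/matrixP => i l; rewrite ord1 -mulmxA [in RHS]mxE.
    rewrite -[RHS](_ : (W *m A) i (enum_rank_in Pg g) = 0); last by rewrite H mxE.
    rewrite !mxE; apply: eq_bigr => t _; by rewrite /A [in RHS]mxE enum_rankK_in // mxE.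
  apply/matrixP => i l; rewrite [RHS]mxE.
  have := H (enum_val l) (enum_valP l); rewrite -mulmxA => /matrixP /(_ i 0).
  rewrite [RHS]mxE => <-; rewrite !mxE; apply: eq_bigr => t _; by rewrite mxE.
have modK : mxmodule rM (kermx A).
  apply/mxmoduleP => x Px; apply/sub_kermxP; apply/keyA => g Pg.
  by rewrite -(mulmxA (kermx A) (rM x)) -repr_mxM // (proj1 (keyA _ _) (mulmx_ker A)) // groupM.
have K0 : kermx A = 0.
  apply/eqP/negPn/negP => nzK.
  have [v nzv /andP[vK vfix]] := fix_in_submod pchar pP modK nzK.
  have /submxP[D defv] := sub0 v vfix.
  have := proj1 (keyA _ v) (sub_kermxP vK) 1%g (group1 P).
  rewrite repr_mx1 mulmx1 defv -mulmxA => /matrixP /(_ 0 0).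
  have wu : (w0 *m u) 0 0 = w0 0 j by rewrite /u -colE mxE.
  rewrite [LHS]mxE big_ord1 wu [RHS]mxE => /eqP; rewrite mulf_eq0 (negbTE nzj) orbF => /eqP D0.
  have D00 : D = 0 by apply/matrixP => a b; rewrite !ord1 D0 mxE.
  by move: nzv; rewrite defv D00 mul0mx eqxx.
move/eqP: K0; rewrite kermx_eq0 => /eqnP rkA.
by rewrite -rkA rank_leq_col.
Qed.
Lemma fitting (k : fieldType) (gT : finGroupType) (P : {group gT}) n'
  (rM : mx_representation k P n'.+1) (y : 'M[k]_n'.+1) (a : k) :
  mx_indecomposable rM -> centgmx rM y -> eigenvalue y a ->
  exists m, (y - a%:M) ^+ m = 0.
Proof.
move=> [_ indec] cy eig.
have [m [q nroot defc]] := multiplicity_XsubC (char_poly y) a.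
have nz : char_poly y != 0 by apply: monic_neq0; apply: char_poly_monic.
rewrite nz /= in nroot.
have hpc : horner_mx y (('X - a%:P) ^+ m) = (y - a%:M) ^+ m.
  by rewrite rmorphXn /= rmorphB /= horner_mx_X horner_mx_C.
have m_gt0 : (0 < m)%N.
  case: m defc {hpc} => // /= defc.
  move: eig; rewrite eigenvalue_root_char defc expr0 mulr1 => r.
  by rewrite r in nroot.
have cop : coprimep q (('X - a%:P) ^+ m).
  by apply: coprimep_expr; rewrite coprimep_XsubC.
have modK : forall r : {poly k}, mxmodule rM (kermxpoly y r).
  move=> r; apply/mxmoduleP => x Px; apply: comm_mx_stable_kermxpoly.
  by rewrite /comm_mx (centgmxP cy).
have sum1 : (kermxpoly y q + kermxpoly y (('X - a%:P) ^+ m) :=: 1%:M)%MS.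
  apply: eqmx_trans (eqmx_sym (kermxpolyM y cop)) _.
  by rewrite -defc /kermxpoly Cayley_Hamilton; apply: kermx0.
have [U0|V0] := indec _ _ (modK q) (modK _) sum1 (mxdirect_kermxpoly y cop).
  exists m; apply/eqP; rewrite -hpc.
  have : (1%:M <= kermxpoly y (('X - a%:P) ^+ m))%MS.
    by rewrite -sum1 U0 adds0mx.
  by move/sub_kermxP; rewrite mul1mx => ->.
exfalso; case/eigenvalueP: eig => v Hv nzv.
have : (v <= kermxpoly y (('X - a%:P) ^+ m))%MS.
  apply/sub_kermxP; rewrite hpc -(subnKC m_gt0) exprS mulmxA mulmxBr Hv.
  by rewrite mul_mx_scalar subrr mul0mx.
by rewrite V0 submx0 (negbTE nzv).
Qed.
Lemma centgM (k : fieldType) (gT : finGroupType) (P : {group gT}) n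
  (rM : mx_representation k P n) (x y : 'M[k]_n) :
  centgmx rM x -> centgmx rM y -> centgmx rM (x *m y).
Proof.
move=> /centgmxP cx /centgmxP cy; apply/centgmxP => g Pg.
by rewrite -mulmxA cy // !mulmxA cx.
Qed.

Lemma centg1 (k : fieldType) (gT : finGroupType) (P : {group gT}) n
  (rM : mx_representation k P n) : centgmx rM 1%:M.
Proof. by apply/centgmxP => g Pg; rewrite mul1mx mulmx1. Qed.

Lemma centgB (k : fieldType) (gT : finGroupType) (P : {group gT}) n
  (rM : mx_representation k P n) (y : 'M[k]_n) (a : k) :
  centgmx rM y -> centgmx rM (y - a%:M).
Proof.
move=> /centgmxP cy; apply/centgmxP => g Pg.
by rewrite mulmxBl mulmxBr cy // scalar_mxC.
Qed.

Lemma singular_nilp (k : fieldType) (gT : finGroupType) (P : {group gT}) n'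
  (rM : mx_representation k P n'.+1) (z : 'M[k]_n'.+1) :
  mx_indecomposable rM -> centgmx rM z -> z \notin unitmx ->
  exists m, z ^+ m = 0.
Proof.
move=> ind cz nu.
have eig : eigenvalue z 0.
  by rewrite /eigenvalue /eigenspace raddf0 subr0 kermx_eq0 row_free_unit.
have [m Hm] := fitting ind cz eig.
by exists m; move: Hm; rewrite raddf0 subr0.
Qed.

Lemma common_eig (k : closedFieldType) (p : nat) (gT : finGroupType) (P : {group gT})
  (pchar : p \in [pchar k]) (pP : (p.-group P)%g) n' (rM : mx_representation k P n'.+1) :
  mx_indecomposable rM ->
  exists2 w : 'rV[k]_n'.+1, w != 0 &
    (w <= rfix_mx rM P)%MS /\ forall y, centgmx rM y -> exists c, w *m y = c *: w.
Proof.
move=> ind.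
pose CE := 'C(enveloping_algebra_mx rM)%MS.
pose Wm (w : 'rV[k]_n'.+1) := CE *m lin_mul_row w.
have memE : forall y, centgmx rM y -> (mxvec y <= CE)%MS.
  by move=> y cy; rewrite memmx_cent_envelop.
have inW : forall w y, centgmx rM y -> (w *m y <= Wm w)%MS.
  by move=> w y cy; rewrite -mul_vec_lin_row submxMr // memE.
have fromW : forall w (v : 'rV_n'.+1), (v <= Wm w)%MS ->
    exists2 y, centgmx rM y & v = w *m y.
  move=> w v /submxP[D ->]; exists (vec_mx (D *m CE)).
    by rewrite -memmx_cent_envelop vec_mxK submxMl.
  by rewrite mulmxA -[RHS]mul_vec_lin_row vec_mxK.
have fixE : forall (w : 'rV[k]_n'.+1) (y : 'M[k]_n'.+1), (w <= rfix_mx rM P)%MS -> centgmx rM y ->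
    (w *m y <= rfix_mx rM P)%MS.
  move=> w y fw cy; apply/(rfix_mxP P) => g Pg.
  move/(rfix_mxP P): fw => fw.
  by rewrite -mulmxA (centgmxP cy g Pg) mulmxA fw.
have wW : forall w, (w <= Wm w)%MS by move=> w; rewrite -{1}(mulmx1 w) inW // centg1.
have step : forall w, w != 0 -> (w <= rfix_mx rM P)%MS ->
    (forall y, centgmx rM y -> y \notin unitmx -> w *m y = 0) \/
    exists2 w', w' != 0 & (w' <= rfix_mx rM P)%MS /\ (\rank (Wm w') < \rank (Wm w))%N.
  move=> w nzw fw.
  case: (classic (exists y, [/\ centgmx rM y, y \notin unitmx & w *m y != 0])); last first.
    move=> H; left => y cy nu; apply/eqP/negPn/negP => nz; apply: H; by exists y.
  case=> y [cy nu nz]; right; exists (w *m y) => //; split; first exact: fixE.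
  have sW : (Wm (w *m y) <= Wm w)%MS.
    apply/row_subP => i; rewrite row_mul -(vec_mxK (row i CE)) mul_vec_lin_row -mulmxA.
    apply: inW; apply: centgM => //; rewrite -memmx_cent_envelop vec_mxK row_sub //.
  rewrite ltnNge; apply/negP => rk.
  have sW' : (Wm w <= Wm (w *m y))%MS by rewrite -(geq_leqif (mxrank_leqif_sup sW)).
  have [x cx defw] := fromW _ _ (submx_trans (wW w) sW').
  have cz : centgmx rM (y *m x) by apply: centgM.
  have nuz : y *m x \notin unitmx by rewrite unitmx_mul (negbTE nu).
  have [m Hm] := singular_nilp ind cz nuz.
  have : w = w *m (y *m x) ^+ m.
    elim: m {Hm} => [|m IHm]; first by rewrite expr0 mulmx1.
    by rewrite exprSr mulmxA -IHm mulmxA -defw.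
  by rewrite Hm mulmx0 => w0; rewrite w0 eqxx in nzw.
have good : forall r w, w != 0 -> (w <= rfix_mx rM P)%MS -> (\rank (Wm w) <= r)%N ->
    exists2 w : 'rV[k]_n'.+1, w != 0 &
      (w <= rfix_mx rM P)%MS /\ forall y, centgmx rM y -> y \notin unitmx -> w *m y = 0.
  elim=> [|r IH] w nzw fw rk.
    have := wW w; have : \rank (Wm w) == 0%N by rewrite -leqn0.
    rewrite mxrank_eq0 => /eqP W0.
    by rewrite W0 => /submx0null H; rewrite H eqxx in nzw.
  case: (step w nzw fw) => [H|[w' nzw' [fw' rkw']]]; first by exists w.
  by apply: (IH w') => //; rewrite -ltnS; apply: leq_trans rkw' rk.
have := rfix_pgroup_pchar pchar rM (ltn0Sn n') pP (subxx P).
case/rowV0Pn => w0 Hw0 nzw0.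
have [w nzw [fw Hw]] := good _ w0 nzw0 Hw0 (leqnn _).
exists w => //; split => // y cy.
have : size (char_poly y) != 1%N by rewrite size_char_poly.
case/closed_rootP => a ra.
have eig : eigenvalue y a by rewrite eigenvalue_root_char.
exists a; apply/eqP; rewrite -subr_eq0 -mul_mx_scalar -mulmxBr; apply/eqP.
apply: Hw; first exact: centgB.
by move: eig; rewrite /eigenvalue /eigenspace kermx_eq0 row_free_unit.
Qed.

Lemma centg0 (k : fieldType) (gT : finGroupType) (P : {group gT}) n
  (rM : mx_representation k P n) : centgmx rM 0.
Proof. by apply/centgmxP => g Pg; rewrite mul0mx mulmx0. Qed.

Lemma centgD (k : fieldType) (gT : finGroupType) (P : {group gT}) n
  (rM : mx_representation k P n) (x y : 'M[k]_n) :
  centgmx rM x -> centgmx rM y -> centgmx rM (x + y).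
Proof.
move=> /centgmxP cx /centgmxP cy; apply/centgmxP => g Pg.
by rewrite mulmxDl mulmxDr cx // cy.
Qed.

Lemma centgZ (k : fieldType) (gT : finGroupType) (P : {group gT}) n
  (rM : mx_representation k P n) (c : k) (x : 'M[k]_n) :
  centgmx rM x -> centgmx rM (c *: x).
Proof.
move=> /centgmxP cx; apply/centgmxP => g Pg.
by rewrite -scalemxAl cx // scalemxAr.
Qed.
Definition dual_fun (k : fieldType) (gT : finGroupType) (P : {group gT}) n
  (rM : mx_representation k P n) (g : gT) : 'M[k]_n := (rM (g^-1)%g)^T.

Lemma dual_repr_proof (k : fieldType) (gT : finGroupType) (P : {group gT}) n
  (rM : mx_representation k P n) : mx_repr P (dual_fun rM).
Proof.
split; first by rewrite /dual_fun invg1 repr_mx1 trmx1.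
move=> x y Px Py; rewrite /dual_fun invMg repr_mxM ?groupV // trmx_mul //.
Qed.

Definition dual_rep (k : fieldType) (gT : finGroupType) (P : {group gT}) n
  (rM : mx_representation k P n) := MxRepresentation (dual_repr_proof rM).

Lemma part1 (k : closedFieldType) (p : nat) (gT : finGroupType) (P : {group gT})
  (pchar : p \in [pchar k]) (pP : (p.-group P)%g) n (rM : mx_representation k P n) :
  mx_indecomposable rM -> End_symmetric rM -> (n <= #|P|)%N.
Proof.
case: n rM => [|n'] rM ind; first by case: ind.
case=> phi [Hlin [_ [Hbim [Hinj _]]]].
have [w0 nzw0 [fw0 Hw0]] := common_eig pchar pP ind.
pose rD := dual_rep rM.
apply: (bound_fix pchar pP (rM := rD)) => //.
pose Z := rfix_mx rD P.
have colfix : forall v : 'rV[k]_n'.+1, (v <= Z)%MS -> forall g, g \in P -> rM g *m v^T = v^T.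
  move=> v /(rfix_mxP P) Hv g Pg.
  have := Hv _ (groupVr Pg); rewrite /= /dual_fun invgK => /(congr1 trmx).
  by rewrite trmx_mul !trmxK.
pose xv (v : 'rV[k]_n'.+1) := v^T *m w0.
have xvE : forall v, (v <= Z)%MS -> centgmx rM (xv v).
  move=> v vZ; apply/centgmxP => g Pg.
  move/(rfix_mxP P): fw0 => fw; by rewrite /xv -mulmxA fw // mulmxA (colfix v vZ g Pg).
have c1 : in_End rM 1%:M by apply: centg1.
have l1 := Hlin _ c1.
have l10 : phi 1%:M 0 = 0.
  have := l1 1 0 0 (centg0 rM) (centg0 rM); rewrite scaler0 addr0 mul1r.
  by move=> H; have := subrr (phi 1%:M 0); rewrite {1}H addrK.
have phiE : forall x y, centgmx rM x -> centgmx rM y -> phi x y = phi 1%:M (x *m y).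
  move=> x y cx cy; have := Hbim 1%:M 1%:M x y c1 c1 cx cy.
  by rewrite !mul1mx mulmx1.
have scal : forall c u, centgmx rM u -> phi 1%:M (c *: u) = c * phi 1%:M u.
  move=> c u cu; have := l1 c u 0 cu (centg0 rM); rewrite !addr0 l10 addr0 //.
pose gv v := phi 1%:M (xv v).
have [j nzj] : exists j, w0 0 j != 0.
  apply/existsP; apply: contraR nzw0; rewrite negb_exists => /forallP H.
  by apply/eqP/matrixP => i l; rewrite ord1 mxE; apply/eqP/negPn/H.
have key : forall v, (v <= Z)%MS -> gv v = 0 -> v = 0.
  move=> v vZ g0.
  have : xv v = 0.
    apply: Hinj; first exact: xvE.
    move=> y cy; rewrite phiE //; last exact: xvE.
    have [c Hc] := Hw0 y cy.
    rewrite /xv -mulmxA Hc -scalemxAr scal; last exact: xvE.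
    by change (c * gv v = 0); rewrite g0 mulr0.
  move=> /matrixP X; apply/matrixP => i l; rewrite ord1.
  have := X l j; rewrite !mxE big_ord1 mxE => /eqP; rewrite mulf_eq0 (negbTE nzj) orbF.
  by move/eqP.
rewrite leqNgt; apply/negP => rk2.
pose r := \rank Z.
pose Zb := row_base Z.
have r0 : (0 < r)%N by apply: leq_trans rk2.
pose i0 : 'I_r := Ordinal r0.
pose i1 : 'I_r := Ordinal rk2.
pose v1 := row i0 Zb.
pose v2 := row i1 Zb.
pose g1 := gv v1.
pose g2 := gv v2.
pose a := if g1 == 0 then 1 else g2.
pose b := if g1 == 0 then 0 else - g1.
pose u := (a *: delta_mx 0 i0 + b *: delta_mx 0 i1 : 'rV[k]_r) *m Zb.
have vZ : forall (c : 'rV_r), (c *m Zb <= Z)%MS.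
  by move=> c; apply: submx_trans (submxMl c Zb) _; rewrite eq_row_base.
have cv : forall c : 'rV_r, centgmx rM (xv (c *m Zb)) by move=> c; apply: xvE.
have uE : u = a *: v1 + b *: v2 by rewrite /u mulmxDl -!scalemxAl -!rowE.
have xvlin : xv u = a *: xv v1 + b *: xv v2.
  by rewrite /xv uE linearD !linearZ /= mulmxDl -!scalemxAl.
have cv1 : centgmx rM (xv v1) by rewrite /v1 rowE; apply: cv.
have cv2 : centgmx rM (xv v2) by rewrite /v2 rowE; apply: cv.
have gu : gv u = 0.
  rewrite /gv xvlin (l1 a (xv v1) (b *: xv v2) cv1 (centgZ b cv2)) scal //.
  change (a * g1 + b * g2 = 0); rewrite /a /b; case: eqP => [->|_].
    by rewrite mulr0 mul0r addr0.
  by rewrite mulNr mulrC addrN.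
have u0 := key u (vZ _) gu.
have C0 : (a *: delta_mx 0 i0 + b *: delta_mx 0 i1 : 'rV[k]_r) = 0.
  by apply: (row_free_inj (row_base_free Z)); rewrite /= mul0mx.
move/matrixP: C0 => C.
have := C 0 i0; have := C 0 i1; rewrite !mxE /=.
rewrite !mulr1 !mulr0 addr0 add0r /a /b.
case: eqP => [_|ng1]; first by move=> _ /eqP; rewrite oner_eq0.
by move=> /eqP; rewrite oppr_eq0 => /eqP.
Qed.
Definition N2 (k : fieldType) : 'M[k]_2 := delta_mx 1 0.

Definition rho (k : fieldType) (gT : finGroupType) (chi : gT -> k) (g : gT) : 'M[k]_2 :=
  1%:M + chi g *: N2 k.

Lemma lift00 : (lift ord0 (ord0 : 'I_1) == 0 :> 'I_2) = false.
Proof. by []. Qed.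

Lemma ord2_0 (H : (0 < 2)%N) : Ordinal H = ord0. Proof. exact: val_inj. Qed.
Lemma ord2_1 (H : (1 < 2)%N) : Ordinal H = lift ord0 ord0. Proof. exact: val_inj. Qed.

Lemma N2sq (k : fieldType) : N2 k *m N2 k = 0.
Proof.
apply/matrixP => i j; rewrite !mxE !big_ord_recl !big_ord0 !mxE /= lift00.
by rewrite !andbF !mulr0 !mul0r !addr0.
Qed.

Lemma rho_repr (k : fieldType) (gT : finGroupType) (P : {group gT}) (chi : gT -> k) :
  {in P &, forall x y, chi (x * y)%g = chi x + chi y} -> mx_repr P (rho chi).
Proof.
move=> add; split.
  have := add 1%g 1%g (group1 P) (group1 P); rewrite mulg1 => h.
  have c0 : chi 1%g = 0 by have := subrr (chi 1%g); rewrite {1}h addrK.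
  by rewrite /rho c0 scale0r addr0.
move=> x y Px Py; rewrite /rho add // mulmxDl !mulmxDr !mul1mx mulmx1.
rewrite -scalemxAl -scalemxAr N2sq !scaler0 addr0 scalerDl.
by rewrite -addrA [chi y *: _ + _]addrC.
Qed.

Lemma comN (k : fieldType) (y : 'M[k]_2) :
  y *m N2 k = N2 k *m y -> y = y 0 0 *: 1%:M + y 1 0 *: N2 k.
Proof.
move=> H.
have h00 := congr1 (fun M : 'M[k]_2 => M 0 0) H; have h10 := congr1 (fun M : 'M[k]_2 => M 1 0) H.
move: h00 h10; rewrite /= !mxE !big_ord_recl !big_ord0 !mxE /=.
rewrite !mulr0 !mul0r !mulr1 !mul1r !add0r !addr0 => h00 h10.
have e1 : (1 : 'I_2) = lift ord0 ord0 by apply: val_inj.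
rewrite e1 in h00 h10 *.
apply/matrixP => i j; rewrite !mxE.
case: i => [[|[|//]] Hi]; case: j => [[|[|//]] Hj];
  rewrite ?(ord2_0 Hi) ?(ord2_1 Hi) ?(ord2_0 Hj) ?(ord2_1 Hj) /=;
  rewrite ?mulr0 ?mulr1 ?addr0 ?add0r // ?e1 //.
Qed.
Lemma rho_End (k : fieldType) (gT : finGroupType) (P : {group gT}) (chi : gT -> k)
  (rr : mx_representation k P 2) (g1 : gT) :
  (forall g, rr g = rho chi g) -> g1 \in P -> chi g1 = 1 ->
  forall y : 'M[k]_2, centgmx rr y <-> y *m N2 k = N2 k *m y.
Proof.
move=> Hr Pg1 c1 y; split.
  move/centgmxP/(_ g1 Pg1); rewrite Hr /rho c1 scale1r mulmxDr mulmxDl mulmx1 mul1mx.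
  exact: addrI.
move=> H; apply/centgmxP => g Pg.
by rewrite Hr /rho mulmxDr mulmxDl mulmx1 mul1mx -scalemxAr -scalemxAl H.
Qed.

Lemma rho_props (k : fieldType) (p : nat) (gT : finGroupType) (P : {group gT})
  (pchar : p \in [pchar k]) (pP : (p.-group P)%g) (chi : gT -> k)
  (rr : mx_representation k P 2) (g1 : gT) :
  (forall g, rr g = rho chi g) -> g1 \in P -> chi g1 = 1 ->
  mx_indecomposable rr /\ End_symmetric rr.
Proof.
move=> Hr Pg1 c1.
have inE := rho_End Hr Pg1 c1.
have comm : forall x y : 'M[k]_2, centgmx rr x -> centgmx rr y -> x *m y = y *m x.
  move=> x y /inE Hx /inE Hy; rewrite (comN Hx).
  by rewrite mulmxDl mulmxDr -!scalemxAl -!scalemxAr mul1mx mulmx1 Hy.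
have EN : centgmx rr (N2 k) by apply/inE.
have E1 : centgmx rr 1%:M by apply/inE; rewrite mul1mx mulmx1.
split.
  split => // U V modU modV sumUV capUV.
  case: (eqVneq U 0) => [->|nzU]; first by left.
  case: (eqVneq V 0) => [->|nzV]; first by right.
  exfalso.
  have [v nzv /andP[vU vf]] := fix_in_submod pchar pP modU nzU.
  have [w nzw /andP[wV wf]] := fix_in_submod pchar pP modV nzV.
  have fix1 : forall v : 'rV[k]_2, (v <= rfix_mx rr P)%MS -> v = v 0 0 *: (delta_mx 0 0 : 'rV[k]_2).
    move=> z /(rfix_mxP P) /(_ g1 Pg1); rewrite Hr /rho c1 scale1r mulmxDr mulmx1.
    move=> /(canRL (addKr z)); rewrite addNr => /matrixP /(_ 0 0).
    rewrite !mxE !big_ord_recl big_ord0 !mxE /= => h.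
    apply/matrixP => i j; rewrite ord1 !mxE.
    move: h; rewrite mulr0 mulr1 add0r addr0 => h.
    case: j => [[|[|//]] Hj]; rewrite ?(ord2_0 Hj) ?(ord2_1 Hj) /= ?mulr1 ?mulr0 //.
  have Hw := fix1 w wf.
  have b0 : w 0 0 != 0.
    by apply/eqP => b0; move: nzw; rewrite Hw b0 scale0r eqxx.
  have e0V : ((delta_mx 0 0 : 'rV[k]_2) <= V)%MS.
    have -> : (delta_mx 0 0 : 'rV[k]_2) = (w 0 0)^-1 *: w.
      transitivity ((w 0 0)^-1 *: (w 0 0 *: (delta_mx 0 0 : 'rV[k]_2))).
        by rewrite scalerA mulVf // scale1r.
      by rewrite -Hw.
    exact: scalemx_sub.
  have vV : (v <= V)%MS by rewrite (fix1 v vf) scalemx_sub.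
  have : (v <= U :&: V)%MS by rewrite sub_capmx vU vV.
  by rewrite capUV submx0 (negbTE nzv).
exists (fun x y => (x *m y) 1 0).
split.
  by move=> x _ a u v _ _; rewrite mulmxDr -scalemxAr !mxE.
split.
  by move=> c x x' y _ _ _; rewrite mulmxDl -scalemxAl !mxE.
split.
  move=> a x b y ca cx cb cy; congr (_ 1 0).
  have cxby : centgmx rr (x *m b *m y) by apply: centgM => //; apply: centgM.
  transitivity (a *m (x *m b *m y)); first by rewrite !mulmxA.
  by rewrite comm // !mulmxA.
split.
  move=> x cx H; have h1 := H _ E1; have h2 := H _ EN.
  rewrite mulmx1 in h1; have Hx := comN (proj1 (inE x) cx).
  rewrite Hx in h1 h2 *; move: h1 h2.
  rewrite !mxE /= !big_ord_recl big_ord0 !mxE /=.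
  rewrite !mulr0 !mulr1 !add0r !addr0 => -> ->.
  by rewrite !scale0r addr0.
move=> l Hl.
have l0 : l 0 = 0.
  have := Hl 1 0 0 (centg0 rr) (centg0 rr); rewrite scaler0 addr0 mul1r.
  by move=> H; have := subrr (l 0); rewrite {1}H addrK.
have lZ : forall c u, centgmx rr u -> l (c *: u) = c * l u.
  by move=> c u cu; have := Hl c u 0 cu (centg0 rr); rewrite !addr0 l0 addr0.
exists (l (N2 k) *: 1%:M + l 1%:M *: N2 k).
  apply/inE; rewrite mulmxDl mulmxDr -!scalemxAl -!scalemxAr mul1mx mulmx1 //.
move=> y cy; have Hy := comN (proj1 (inE y) cy).
rewrite {2}Hy (Hl _ _ _ E1 (centgZ _ EN)) lZ //.
rewrite [in LHS]Hy !mxE !big_ord_recl big_ord0 !mxE /=.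
ring.
Qed.
Lemma new_elem (k : closedFieldType) (s : seq k) : exists x, x \notin s.
Proof.
pose q := \prod_(a <- s) ('X - a%:P).
have nzq : q != 0 by apply: monic_neq0; apply: monic_prod_XsubC.
have sz : size (q * 'X - 1) != 1%N.
  rewrite size_polyDl size_mulX // ?size_polyN ?size_poly1 /q size_prod_XsubC //.
case/closed_rootP: sz => x; rewrite /root !hornerE => rx.
exists x; apply/negP => xs.
have : root q x by rewrite /q root_prod_XsubC.
rewrite /root => /eqP q0; move: rx; rewrite q0 mul0r sub0r oppr_eq0 oner_eq0.
by [].
Qed.

Lemma distinct_seq (k : closedFieldType) N : exists s : seq k, uniq s /\ size s = N.
Proof.
elim: N => [|N [s [us ss]]]; first by exists [::].
have [x xs] := new_elem s.
by exists (x :: s); rewrite /= xs us ss.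
Qed.
Lemma Fp_to_add (k : fieldType) (p : nat) (pchar : p \in [pchar k]) (a b : 'F_p) :
  (nat_of_ord (a + b)%R)%:R = (a : nat)%:R + (b : nat)%:R :> k.
Proof.
have pr := pcharf_prime pchar.
have -> : (a + b)%R = (((a : nat) + b)%N%:R : 'F_p) by rewrite natrD !natr_Zp.
by rewrite val_Fp_nat // (GRing.natr_mod_pchar pchar) natrD.
Qed.

Lemma chars (k : fieldType) (p : nat) (gT : finGroupType) (P : {group gT})
  (pchar : p \in [pchar k]) (pP : (p.-group P)%g) :
  ~~ cyclic P -> exists (chi1 chi2 : gT -> k) (g1 g2 : gT),
   [/\ g1 \in P, g2 \in P, {in P &, forall x y, chi1 (x * y)%g = chi1 x + chi1 y},
       {in P &, forall x y, chi2 (x * y)%g = chi2 x + chi2 y} &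
       [/\ chi1 g1 = 1, chi1 g2 = 0, chi2 g1 = 0 & chi2 g2 = 1]].
Proof.
move=> ncP.
have pr := pcharf_prime pchar.
have abQ : (p.-abelem (P / 'Phi(P)))%g := Phi_quotient_abelem pP.
have ntQ : (P / 'Phi(P) != 1)%g.
  apply: contra ncP => /eqP Q1; by apply: Phi_quotient_cyclic; rewrite Q1 cyclic1.
pose ErV := abelem_rV abQ ntQ.
have dimgt : (0 < abelem_dim' (P / 'Phi(P))%g)%N.
  rewrite lt0n; apply/negP => /eqP d0; move: ncP; apply/negP/negPn.
  apply: Phi_quotient_cyclic; apply: prime_cyclic.
  by rewrite -(card_abelem_rV abQ ntQ) card_mx d0 card_Fp // expn1.
pose d := abelem_dim' (P / 'Phi(P))%g.
pose i0 : 'I_d.+1 := ord0.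
pose i1 : 'I_d.+1 := Ordinal (dimgt : (1 < d.+1)%N).
pose chi (i : 'I_d.+1) (g : gT) : k := (nat_of_ord ((ErV (coset 'Phi(P) g)) 0 i))%:R.
have nPhi : (P \subset 'N('Phi(P)))%g := normal_norm (Phi_normal P).
have add : forall i, {in P &, forall x y, chi i (x * y)%g = chi i x + chi i y}.
  move=> i x y Px Py; rewrite /chi morphM ?(subsetP nPhi) //.
  by rewrite /ErV abelem_rV_M ?mem_quotient // mxE Fp_to_add.
have pre : forall v, exists2 g, g \in P & ErV (coset 'Phi(P) g) = v.
  move=> v; have := mem_rVabelem abQ ntQ v; case/morphimP => g Ng Pg def.
  by exists g => //; rewrite /ErV -def rVabelemK.
have [g1 Pg1 e1] := pre (delta_mx 0 i0).
have [g2 Pg2 e2] := pre (delta_mx 0 i1).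
have chiE : forall i g v, ErV (coset 'Phi(P) g) = delta_mx 0 v -> chi i g = (v == i)%:R.
  move=> i g v e; rewrite /chi e mxE eqxx /= val_Fp_nat // (GRing.natr_mod_pchar pchar).
  by rewrite eq_sym.
exists (chi i0), (chi i1), g1, g2; split => //; try exact: add.
by rewrite !(chiE _ _ _ e1) !(chiE _ _ _ e2).
Qed.
Lemma part2 (k : closedFieldType) (p : nat) (gT : finGroupType) (P : {group gT})
  (pchar : p \in [pchar k]) (pP : (p.-group P)%g) :
  ~~ cyclic P ->
    forall N : nat, exists (d : 'I_N -> nat)
      (r : forall i : 'I_N, mx_representation k P (d i)),
      (forall i, mx_indecomposable (r i) /\ End_symmetric (r i)) /\
      (forall i j, i != j -> ~ mx_rsim (r i) (r j)).
Proof.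
move=> ncP N.
have [chi1 [chi2 [g1 [g2 [Pg1 Pg2 a1 a2 [c11 c12 c21 c22]]]]]] := chars pchar pP ncP.
have [s [us ss]] := distinct_seq k N.
pose lam (i : 'I_N) := nth 0 s i.
pose chiL (i : 'I_N) (g : gT) := chi1 g + lam i * chi2 g.
have addL : forall i, {in P &, forall x y, chiL i (x * y)%g = chiL i x + chiL i y}.
  by move=> i x y Px Py; rewrite /chiL a1 // a2 //; ring.
have L1 : forall i, chiL i g1 = 1 by move=> i; rewrite /chiL c11 c21 mulr0 addr0.
have L2 : forall i, chiL i g2 = lam i by move=> i; rewrite /chiL c12 c22 mulr1 add0r.
exists (fun _ => 2%N), (fun i => MxRepresentation (rho_repr (addL i))).
split.
  by move=> i; apply: (rho_props pchar pP (chi := chiL i) (g1 := g1)) => //.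
move=> i j nij [B _ rfB HB].
have H1 := HB g1 Pg1; have H2 := HB g2 Pg2.
rewrite /= /rho !L1 scale1r mulmxDl mulmxDr mul1mx mulmx1 in H1.
rewrite /= /rho !L2 mulmxDl mulmxDr mul1mx mulmx1 in H2.
have NB : N2 k *m B = B *m N2 k by apply: (addrI B).
move: H2; rewrite -scalemxAl -scalemxAr -NB => /addrI /eqP.
rewrite -subr_eq0 -scalerBl scaler_eq0 subr_eq0 => /orP[|].
  rewrite /lam nth_uniq ?ss // => /eqP /val_inj eij; by rewrite eij eqxx in nij.
move/eqP => NB0.
have : N2 k = 0 by apply: (row_free_inj rfB); rewrite mul0mx.
move/matrixP => /(_ 1 0); rewrite !mxE /= => /eqP; rewrite oner_eq0.
by [].
Qed.

Unset Implicit Arguments.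

Theorem corollary5p4 (k : closedFieldType) (p : nat) (gT : finGroupType)
    (P : {group gT}) :
  p \in [pchar k] -> (p.-group P)%g ->
  (forall (n : nat) (rM : mx_representation k P n),
      mx_indecomposable rM -> End_symmetric rM -> (n <= #|P|)%N) /\
  (~~ cyclic P ->
    forall N : nat, exists (d : 'I_N -> nat)
      (r : forall i : 'I_N, mx_representation k P (d i)),
      (forall i, mx_indecomposable (r i) /\ End_symmetric (r i)) /\
      (forall i j, i != j -> ~ mx_rsim (r i) (r j))).
Proof.
move=> pchar pP; split.
  move=> n rM; exact: (part1 pchar pP).
exact: (part2 pchar pP).
Qed.
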